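(* Let $I$ be a monomial ideal of $T=\Bbbk[\alpha_1,\alpha_2]$ with $\dim_\Bbbk T/I=r<\infty$. Then \[\dim_\Bbbk\operatorname{Hom}_T(I,T/I)_{>0}=\sum_{\mathbf{u}\in M_I}\sum_{a>|\mathbf{u}|}\lambda_I(a)-\sum_{\mathbf{u}\in R_I}\sum_{a>|\mathbf{u}|}\lambda_I(a).\] Equivalently, $\dim_\Bbbk\operatorname{Hom}_T(I,T/I)_{>0}=\sum_{c}\big(\beta_{1,c}(T/I)-\beta_{2,c}(T/I)\big)\sum_{a>c}\lambda_I(a)$.
   Context: $\Bbbk$ algebraically closed, $T$ standard graded; $\operatorname{Hom}_T(I,T/I)_{>0}=\bigoplus_{d>0}\operatorname{Hom}_T(I,T/I)_d$ where $\operatorname{Hom}_T(I,T/I)_d$ consists of homomorphisms raising degree by $d$. Monomials $\alpha_1^s\alpha_2^t$ are identified with lattice points $(s,t)$, and $|(s,t)|=s+t$. Write the minimal monomial generators of $I$ as $\alpha_1^{a_0},\alpha_1^{a_1}\alpha_2^{b_1},\ldots,\alpha_1^{a_{m-1}}\alpha_2^{b_{m-1}},\alpha_2^{b_m}$ with $a_0>a_1>\cdots>a_{m-1}>a_m=0$ and $0=b_0<b_1<\cdots<b_m$. $M_I=\{(a_i,b_i):0\le i\le m\}$ is the set of exponents of minimal generators, and $R_I=\{(a_{i-1},b_i):1\leq i\leq m\}$ is the set of multidegrees of the minimal syzygies (lcm's of consecutive generators). $\lambda_I(a)$ is the number of monomials of degree $a$ not in $I$. $\beta_{i,c}$ are graded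 Betti numbers. *)

(* Defs.v *)
From HB Require Import structures.
From mathcomp Require Import all_boot all_order all_algebra.
From mathcomp Require Import mpoly.

Set Implicit Arguments.
Unset Strict Implicit.
Unset Printing Implicit Defensive.

Import Order.TTheory GRing.Theory.
Local Open Scope ring_scope.

Section MonomialIdeal.

(* The monomial ideal I is given by its minimal monomial generators
   alpha_1^(a i) alpha_2^(b i), 0 <= i <= m, with
   a 0 > a 1 > ... > a m = 0 and 0 = b 0 < b 1 < ... < b m
   (these conditions are hypotheses of the main theorem). *)
Variables (k : fieldType) (m : nat) (a b : nat -> nat).

Definition T := {mpoly k[2]}.

Definition alpha1 : T := 'X_(ord0 : 'I_2).
Definition alpha2 : T := 'X_(ord_max : 'I_2).

Definition mono (s t : nat) : T := alpha1 ^+ s * alpha2 ^+ t.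

Definition inI (p : T) : Prop :=
  exists q : nat -> T, p = \sum_(i < m.+1) q i * mono (a i) (b i).

Definition congI (p q : T) : Prop := inI (p - q).

(* A map phi : I -> T/I, represented by a function T -> T whose values
   on I are representatives of classes in T/I (values outside I are
   irrelevant); it is a T-module homomorphism. *)
Definition isHom (phi : T -> T) : Prop :=
  (forall p q, inI p -> inI q -> congI (phi (p + q)) (phi p + phi q)) /\
  (forall c p, inI p -> congI (phi (c * p)) (c * phi p)).

Definition isHomDeg (d : nat) (phi : T -> T) : Prop :=
  isHom phi /\
  (forall (e : nat) (p : T), inI p -> p \is e.-homog ->
     exists q : T, q \is (e + d)%N.-homog /\ congI (phi p) q).

Definition isHomPos (phi : T -> T) : Prop :=
  exists (D : nat) (psi : nat -> T -> T),
    (forall d, isHomDeg d.+1 (psi d)) /\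
    (forall p, inI p -> congI (phi p) (\sum_(d < D) psi d p)).

(* the k-vector space of (classes of) maps in S, where two maps are
   identified when they agree in T/I on every element of I, has
   dimension n over k. *)
Definition hasdimI (S : (T -> T) -> Prop) (n : nat) : Prop :=
  exists f : 'I_n -> T -> T,
    (forall i, S (f i)) /\
    (forall c : 'I_n -> k,
        (forall p, inI p -> congI (\sum_(i < n) c i *: f i p) 0) ->
        forall i, c i = 0) /\
    (forall phi, S phi ->
       exists c : 'I_n -> k,
         forall p, inI p -> congI (phi p) (\sum_(i < n) c i *: f i p)).

Definition monoInI (s t : nat) : bool :=
  [exists i : 'I_m.+1, (a i <= s)%N && (b i <= t)%N].

Definition lambdaI (x : nat) : nat :=
  #|[set s : 'I_x.+1 | ~~ monoInI s (x - s)]|.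

(* \sum_{x > u} lambda_I(x); lambda_I(x) = 0 for x >= a 0 + b m,
   so the sum is truncated there. *)
Definition tailI (u : nat) : nat :=
  (\sum_(u.+1 <= x < a 0 + b m) lambdaI x)%N.

(* sum over M_I = {(a i, b i) : 0 <= i <= m} *)
Definition sumM : nat := (\sum_(i < m.+1) tailI (a i + b i))%N.

(* sum over R_I = {(a (i-1), b i) : 1 <= i <= m} *)
Definition sumR : nat := (\sum_(i < m) tailI (a i + b i.+1))%N.

End MonomialIdeal.

(* Main.v *)
Require Import Defs.
From HB Require Import structures.
From mathcomp Require Import all_boot all_order all_algebra.
From mathcomp Require Import mpoly.
From mathcomp Require Import zify ring.
Set Implicit Arguments.
Unset Strict Implicit.
Unset Printing Implicit Defensive.
Import Order.TTheory GRing.Theory.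
Local Open Scope ring_scope.

Section Main.
Variables (k : fieldType) (m : nat) (a b : nat -> nat).
Hypothesis ha_dec : forall i, (i < m)%N -> (a i.+1 < a i)%N.
Hypothesis ha_last : a m = 0%N.
Hypothesis hb_first : b 0%N = 0%N.
Hypothesis hb_inc : forall i, (i < m)%N -> (b i < b i.+1)%N.

Local Notation T := (T k).
Local Notation inI := (@inI k m a b).
Local Notation congI := (@congI k m a b).
Local Notation mono := (@mono k).
Local Notation monoInI := (monoInI m a b).

Definition o0 : 'I_2 := ord0.
Definition o1 : 'I_2 := ord_max.

Lemma I2_cases (i : 'I_2) : i = o0 \/ i = o1.
Proof.
case: i => [[|[|n]] Hi]; [left|right|by []]; apply/val_inj => //.
Qed.

Definition mn (s t : nat) : 'X_{1..2} := [multinom (if i == o0 then s else t) | i < 2].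

Lemma mn0 s t : mn s t o0 = s. Proof. by rewrite mnmE eqxx. Qed.
Lemma mn1 s t : mn s t o1 = t. Proof. by rewrite mnmE. Qed.

Lemma mnE (mu : 'X_{1..2}) : mu = mn (mu o0) (mu o1).
Proof. by apply/mnmP => i; case: (I2_cases i) => ->; rewrite ?mn0 ?mn1. Qed.

Lemma lemP (mu nu : 'X_{1..2}) :
  (mu <= nu)%MM = (mu o0 <= nu o0)%N && (mu o1 <= nu o1)%N.
Proof.
apply/mnm_lepP/andP => [H|[H0 H1] i]; first by split; apply: H.
by case: (I2_cases i) => ->.
Qed.

Lemma monoX s t : mono s t = 'X_[mn s t].
Proof.
rewrite /Defs.mono /alpha1 /alpha2 !mpolyXn -mpolyXD; congr 'X_[_].
apply/mnmP => i; rewrite mnmDE !mulmnE !mnm1E.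
by case: (I2_cases i) => ->; rewrite ?mn0 ?mn1 /o0 /o1 /= mul1n mul0n ?addn0 ?add0n.
Qed.

Lemma inI0 : inI 0.
Proof. by exists (fun _ => 0); rewrite big1 // => i _; rewrite mul0r. Qed.

Lemma inID p q : inI p -> inI q -> inI (p + q).
Proof.
move=> [f ->] [g ->]; exists (fun i => f i + g i).
by rewrite -big_split /=; apply: eq_bigr => i _; rewrite mulrDl.
Qed.

Lemma inIM c p : inI p -> inI (c * p).
Proof.
move=> [f ->]; exists (fun i => c * f i).
by rewrite mulr_sumr; apply: eq_bigr => i _; rewrite mulrA.
Qed.

Lemma inIN p : inI p -> inI (- p).
Proof. by move=> H; rewrite -mulN1r; apply: inIM. Qed.

Lemma inIB p q : inI p -> inI q -> inI (p - q).
Proof. by move=> Hp Hq; apply: inID => //; apply: inIN. Qed.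

Lemma inIZ (c : k) p : inI p -> inI (c *: p).
Proof. by move=> H; rewrite -mul_mpolyC; apply: inIM. Qed.

Lemma inI_sum (I : Type) (r : seq I) (P : pred I) (F : I -> T) :
  (forall i, P i -> inI (F i)) -> inI (\sum_(i <- r | P i) F i).
Proof.
move=> H; elim/big_ind: _ => //; [exact: inI0 | exact: inID].
Qed.

Lemma inIgen (i : 'I_m.+1) : inI (mono (a i) (b i)).
Proof.
exists (fun j => ((j == i :> nat)%:R : T)).
rewrite (bigD1 i) //= eqxx mul1r big1 ?addr0 // => j /negPf Hj.
by rewrite -(inj_eq val_inj) in Hj; rewrite /= Hj mul0r.
Qed.

Lemma mcoeffMX' (p : T) (g nu : 'X_{1..2}) :
  (p * 'X_[g])@_nu = if (g <= nu)%MM then p@_(nu - g) else 0.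
Proof.
case: ifP => Hg.
  by rewrite -{1}(submK Hg) addmC mcoeffMX.
apply: memN_msupp_eq0; rewrite (perm_mem (msuppMX _ _)).
apply/mapP => -[m' _ Hm]; move/negbT: Hg; rewrite Hm.
by rewrite lem_addr.
Qed.

Definition gm (i : nat) : 'X_{1..2} := mn (a i) (b i).

Definition stdm (mu : 'X_{1..2}) : bool := ~~ monoInI (mu o0) (mu o1).

Lemma monoInIP s t : reflect (exists i : 'I_m.+1, (gm i <= mn s t)%MM) (monoInI s t).
Proof.
apply: (iffP existsP) => -[i Hi]; exists i.
  by rewrite lemP /gm !mn0 !mn1.
by move: Hi; rewrite lemP /gm !mn0 !mn1.
Qed.

Lemma KL1 p mu : inI p -> stdm mu -> p@_mu = 0.
Proof.
move=> [f ->] Hs; rewrite raddf_sum /= big1 // => i _.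
rewrite monoX mcoeffMX' ; case: ifP => // Hle.
move/negP: Hs; case; apply/monoInIP; exists i; by rewrite -mnE.
Qed.

Lemma KL2 p : (forall mu, stdm mu -> p@_mu = 0) -> inI p.
Proof.
move=> H; rewrite (mpolyE p) big_seq; apply: inI_sum => mu Hmu.
apply: inIZ; have : ~~ stdm mu.
  by apply/negP => /H /eqP; rewrite mcoeff_eq0 Hmu.
rewrite negbK => /monoInIP [i]; rewrite -mnE => Hle.
rewrite -(submK Hle) mpolyXD -monoX; exact: inIM (inIgen i).
Qed.

Lemma congI_coef p q mu : congI p q -> stdm mu -> p@_mu = q@_mu.
Proof. by move=> H /(KL1 H) /eqP; rewrite mcoeffB subr_eq0 => /eqP. Qed.

Lemma coef_congI p q : (forall mu, stdm mu -> p@_mu = q@_mu) -> congI p q.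
Proof. by move=> H; apply: KL2 => mu /H; rewrite mcoeffB => ->; rewrite subrr. Qed.

End Main.


Section Hom.
Variables (k : fieldType) (m : nat) (a b : nat -> nat).
Hypothesis ha_dec : forall i, (i < m)%N -> (a i.+1 < a i)%N.
Hypothesis ha_last : a m = 0%N.
Hypothesis hb_first : b 0%N = 0%N.
Hypothesis hb_inc : forall i, (i < m)%N -> (b i < b i.+1)%N.

Local Notation T := (T k).
Local Notation inI := (@inI k m a b).
Local Notation congI := (@congI k m a b).
Local Notation mono := (@mono k).
Local Notation monoInI := (monoInI m a b).
Local Notation isHom := (@isHom k m a b).

Lemma congI_refl p : congI p p.
Proof. by rewrite /congI subrr; apply: inI0. Qed.

Lemma congI_sym p q : congI p q -> congI q p.
Proof. by rewrite /congI => H; rewrite -opprB; apply: inIN. Qed.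

Lemma congI_trans p q r : congI p q -> congI q r -> congI p r.
Proof.
rewrite /congI => H1 H2; have -> : p - r = (p - q) + (q - r) by rewrite addrA subrK.
exact: inID.
Qed.

Lemma congI_add p q p' q' : congI p q -> congI p' q' -> congI (p + p') (q + q').
Proof.
rewrite /congI => H1 H2; have -> : p + p' - (q + q') = (p - q) + (p' - q').
  by rewrite opprD addrACA.
exact: inID.
Qed.

Lemma congI_mul c p q : congI p q -> congI (c * p) (c * q).
Proof. by rewrite /congI -mulrBr; apply: inIM. Qed.

Lemma congI_scale (c : k) p q : congI p q -> congI (c *: p) (c *: q).
Proof. by rewrite /congI -scalerBr; apply: inIZ. Qed.

Lemma congI_sum (I : Type) (r : seq I) (P : pred I) (F G : I -> T) :
  (forall i, P i -> congI (F i) (G i)) ->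
  congI (\sum_(i <- r | P i) F i) (\sum_(i <- r | P i) G i).
Proof.
move=> H; elim/big_rec2: _ => [|i x y Pi Hxy]; first exact: congI_refl.
exact: congI_add (H _ Pi) Hxy.
Qed.

Lemma congI_inI p q : congI p q -> inI q -> inI p.
Proof. by rewrite /congI => H1 H2; rewrite -(subrK q p); apply: inID. Qed.

Lemma hom0 phi : isHom phi -> congI (phi 0) 0.
Proof.
move=> [_ H]; have := H 0 _ (@inIgen k m a b ord0).
by rewrite !mul0r.
Qed.

Lemma hom_sum phi (I : Type) (r : seq I) (P : pred I) (F : I -> T) :
  isHom phi -> (forall i, P i -> inI (F i)) ->
  congI (phi (\sum_(i <- r | P i) F i)) (\sum_(i <- r | P i) phi (F i)).
Proof.
move=> Hphi HF; elim: r => [|x r IH].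
  by rewrite !big_nil; apply: hom0.
rewrite !big_cons; case: ifP => Px //.
have Hr : inI (\sum_(i <- r | P i) F i) by apply: inI_sum.
apply: congI_trans (Hphi.1 _ _ (HF _ Px) Hr) _.
exact: congI_add (congI_refl _) IH.
Qed.

Lemma hom_agree phi psi : isHom phi -> isHom psi ->
  (forall i : 'I_m.+1, congI (phi (mono (a i) (b i))) (psi (mono (a i) (b i)))) ->
  forall p, inI p -> congI (phi p) (psi p).
Proof.
move=> Hphi Hpsi H p [f ->].
have Hg (i : 'I_m.+1) : inI (f i * mono (a i) (b i)) by apply: inIM; apply: (@inIgen k m a b i).
have E1 := @hom_sum phi _ (index_enum 'I_m.+1) xpredT (fun i => f i * mono (a i) (b i)) Hphi (fun i _ => Hg i).
have E2 := @hom_sum psi _ (index_enum 'I_m.+1) xpredT (fun i => f i * mono (a i) (b i)) Hpsi (fun i _ => Hg i).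
apply: congI_trans E1 _; apply: congI_trans _ (congI_sym E2).
apply: congI_sum => i _.
apply: congI_trans (Hphi.2 _ _ (@inIgen k m a b i)) _.
apply: congI_trans _ (congI_sym (Hpsi.2 _ _ (@inIgen k m a b i))).
exact: congI_mul.
Qed.

Lemma a_le i j : (i <= j)%N -> (j <= m)%N -> (a j <= a i)%N.
Proof.
move=> Hij Hjm; elim: j Hij Hjm => [|j IH]; first by rewrite leqn0 => /eqP ->.
rewrite leq_eqVlt => /orP [/eqP -> //|Hij] Hjm.
apply: leq_trans (ltnW (ha_dec Hjm)) (IH Hij (ltnW Hjm)).
Qed.

Lemma b_le i j : (i <= j)%N -> (j <= m)%N -> (b i <= b j)%N.
Proof.
move=> Hij Hjm; elim: j Hij Hjm => [|j IH]; first by rewrite leqn0 => /eqP ->.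
rewrite leq_eqVlt => /orP [/eqP -> //|Hij] Hjm.
apply: leq_trans (IH Hij (ltnW Hjm)) (ltnW (hb_inc Hjm)).
Qed.

Definition std (s t : nat) : bool := ~~ monoInI s t.

Lemma std_mono s t s' t' : std s t -> (s' <= s)%N -> (t' <= t)%N -> std s' t'.
Proof.
move=> H Hs Ht; apply/negP => /existsP [i /andP [H1 H2]].
move/negP: H; apply; apply/existsP; exists i.
by rewrite (leq_trans H1 Hs) (leq_trans H2 Ht).
Qed.

Lemma std_bound s t : std s t -> (s < a 0%N)%N /\ (t < b m)%N.
Proof.
move=> H; split; rewrite ltnNge; apply/negP => Hle; move/negP: H; apply;
  apply/existsP.
  by exists ord0; rewrite /= Hle hb_first.
by exists ord_max; rewrite /= Hle ha_last.
Qed.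

Lemma stdmE mu : stdm m a b mu = std (mu (o0)) (mu (o1)).
Proof. by []. Qed.

End Hom.


Section Gen.
Variables (k : fieldType) (n B : nat) (P : nat -> nat -> nat -> bool).
Hypothesis HP : forall i s t, P i s t -> [/\ (i < n)%N, (s < B)%N & (t < B)%N].

Definition Idx := {x : 'I_n * 'I_B * 'I_B | P x.1.1 x.1.2 x.2}.
Definition idx (x : Idx) : nat * nat * nat :=
  (nat_of_ord (val x).1.1, nat_of_ord (val x).1.2, nat_of_ord (val x).2).

Lemma idx_inj : injective idx.
Proof.
move=> [[[i s] t] Hx] [[[i' s'] t'] Hx'] /= [E1 E2 E3].
apply: val_inj => /=.
by rewrite (ord_inj E1) (ord_inj E2) (ord_inj E3).
Qed.

Lemma idx_P x : P (idx x).1.1 (idx x).1.2 (idx x).2.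
Proof. exact: (valP x). Qed.

Lemma idx_ex i s t : P i s t -> exists x, idx x = (i, s, t).
Proof.
move=> H; have [Hi Hs Ht] := HP H.
by exists (exist _ (Ordinal Hi, Ordinal Hs, Ordinal Ht) H).
Qed.

Definition V := {ffun Idx -> k^o}.

Definition ext (w : V) (i s t : nat) : k := \sum_(x : Idx | idx x == (i, s, t)) w x.

Lemma ext_id w x i s t : idx x = (i, s, t) -> ext w i s t = w x.
Proof.
move=> H; rewrite /ext (big_pred1 x) // => y /=.
rewrite -H; apply/eqP/eqP => [/idx_inj //|-> //].
Qed.

Lemma ext_out w i s t : ~~ P i s t -> ext w i s t = 0.
Proof.
move=> H; rewrite /ext big_pred0 // => y; apply/negP => /eqP E.
by move: (idx_P y); rewrite E => Hy; rewrite Hy in H.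
Qed.

Lemma ext_lin (c : k) w w' i s t :
  ext (c *: w + w') i s t = c * ext w i s t + ext w' i s t.
Proof.
rewrite /ext mulr_sumr -big_split /=; apply: eq_bigr => x _.
by rewrite !ffunE.
Qed.

Lemma ext_sum (I : Type) (r : seq I) (Q : pred I) (F : I -> V) i s t :
  ext (\sum_(j <- r | Q j) F j) i s t = \sum_(j <- r | Q j) ext (F j) i s t.
Proof.
rewrite /ext exchange_big /=; apply: eq_bigr => x _.
by rewrite sum_ffunE.
Qed.

Definition del (i s t : nat) : V := [ffun x => (idx x == (i, s, t))%:R].

Lemma ext_del i s t i' s' t' :
  ext (del i s t) i' s' t' = (P i' s' t' && ((i', s', t') == (i, s, t)))%:R.
Proof.
case HP' : (P i' s' t').
  have [x Hx] := idx_ex HP'; by rewrite (ext_id _ Hx) ffunE Hx.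
by rewrite ext_out ?HP'.
Qed.

Lemma del_out i s t : ~~ P i s t -> del i s t = 0.
Proof.
move=> H; apply/ffunP => x; rewrite !ffunE; case: eqP => // E.
by move: (idx_P x); rewrite E => Hy; rewrite Hy in H.
Qed.

Lemma V_decomp (u : V) : u = \sum_(x : Idx) u x *: [ffun y => (idx y == idx x)%:R].
Proof.
apply/ffunP => y; rewrite sum_ffunE (bigD1 y) //= big1 ?addr0.
  by rewrite !ffunE eqxx; change (u y = u y * 1); rewrite mulr1.
move=> x Hx; rewrite !ffunE.
by rewrite (inj_eq idx_inj) eq_sym (negPf Hx) scaler0.
Qed.

Lemma dimV : \dim (fullv : {vspace V}) = #|{: Idx}|.
Proof. by rewrite dimvf /dim /= muln1. Qed.

End Gen.


Section Lin.
Variables (k : fieldType) (m : nat) (a b : nat -> nat).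
Hypothesis ha_dec : forall i, (i < m)%N -> (a i.+1 < a i)%N.
Hypothesis ha_last : a m = 0%N.
Hypothesis hb_first : b 0%N = 0%N.
Hypothesis hb_inc : forall i, (i < m)%N -> (b i < b i.+1)%N.

Local Notation std := (std m a b).

Definition B := (a 0%N + b m)%N.
Definition PW (i s t : nat) : bool := [&& (i <= m)%N, std s t & (a i + b i < s + t)%N].
Definition PU (i s t : nat) : bool := [&& (i < m)%N, std s t & (a i + b i.+1 < s + t)%N].

Lemma HPW i s t : PW i s t -> [/\ (i < m.+1)%N, (s < B)%N & (t < B)%N].
Proof.
case/and3P => Hi Hs _; have [H1 H2] := std_bound ha_last hb_first Hs.
by split => //; rewrite /B; lia.
Qed.

Lemma HPU i s t : PU i s t -> [/\ (i < m)%N, (s < B)%N & (t < B)%N].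
Proof.
case/and3P => Hi Hs _; have [H1 H2] := std_bound ha_last hb_first Hs.
by split => //; rewrite /B; lia.
Qed.

Local Notation W := (@V k m.+1 B PW).
Local Notation U := (@V k m B PU).
Local Notation extW := (@ext k m.+1 B PW).
Local Notation extU := (@ext k m B PU).
Local Notation idW := (@idx m.+1 B PW).
Local Notation idU := (@idx m B PU).

Definition db j := (b j.+1 - b j)%N.
Definition da j := (a j - a j.+1)%N.

Definition Aval (w : W) (j s t : nat) : k :=
  (if (db j <= t)%N then extW w j s (t - db j)%N else 0) -
  (if (da j <= s)%N then extW w j.+1 (s - da j)%N t else 0).

Definition Amap (w : W) : U := [ffun y => Aval w (idU y).1.1 (idU y).1.2 (idU y).2].

Lemma Aval_lin c w w' j s t : Aval (c *: w + w') j s t = c * Aval w j s t + Aval w' j s t.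
Proof.
rewrite /Aval !ext_lin; case: ifP => _; case: ifP => _; ring.
Qed.

Lemma Amap_is_linear : linear Amap.
Proof.
move=> c w w'; apply/ffunP => y; rewrite !ffunE Aval_lin. by [].
Qed.

HB.instance Definition _ := GRing.isLinear.Build k W U *:%R Amap Amap_is_linear.

Definition Alin : 'Hom(W, U) := linfun Amap.

Lemma AlinE w : Alin w = Amap w.
Proof. exact: lfunE. Qed.


Local Notation eW := (@del k m.+1 B PW).
Local Notation dU := (@del k m B PU).

Lemma ifR (c d : bool) : (if c then (d%:R : k) else 0) = (c && d)%:R.
Proof. by case: c. Qed.

Lemma E1 i s t j s' t' : PW i s t ->
  ((db j <= t') && (PW j s' (t' - db j) && ((j, s', t' - db j) == (i, s, t))))%N
  = ((j, s', t') == (i, s, t + db i)%N).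
Proof.
move=> H; rewrite !xpair_eqE; apply/idP/idP.
  case/andP => H1 /andP [_ /andP [/andP [/eqP Ej /eqP Es] /eqP Et]].
  subst; rewrite !eqxx /=; apply/eqP; lia.
case/andP => /andP [/eqP Ej /eqP Es] /eqP Et; subst.
by rewrite addnK leq_addl H !eqxx.
Qed.

Lemma E2 i s t j s' t' : PW i s t ->
  ((da j <= s') && (PW j.+1 (s' - da j) t' && ((j.+1, s' - da j, t') == (i, s, t))))%N
  = (if i is i'.+1 then (j, s', t') == (i', s + da i', t)%N else false).
Proof.
move=> H; rewrite !xpair_eqE; case: i H => [|i] H.
  by apply/negP => /andP [_ /andP [_ /andP [/andP [] ]]].
rewrite !xpair_eqE eqSS; apply/idP/idP.
  case/andP => H1 /andP [_ /andP [/andP [/eqP Ej /eqP Es] /eqP Et]].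
  subst; rewrite !eqxx /= andbT; apply/eqP; lia.
case/andP => /andP [/eqP Ej /eqP Es] /eqP Et; subst.
by rewrite addnK leq_addl H !eqxx.
Qed.

Lemma A_eW i s t : PW i s t ->
  Amap (eW i s t) = dU i s (t + db i)%N - (if i is i'.+1 then dU i' (s + da i')%N t else 0).
Proof.
move=> H; apply/ffunP => y; rewrite !ffunE /Aval !(ext_del k HPW) !ifR E1 // E2 //.
by case: i H => [|i] H; rewrite ?ffunE ?subr0 //.
Qed.

Lemma Amap_img w : Amap w \in limg Alin.
Proof. by rewrite -AlinE memv_img ?memvf. Qed.

Lemma dU_A j s t : (b j.+1 <= t)%N -> dU j s t \in limg Alin.
Proof.
elim: j s t => [|j IH] s t Ht.
  case HPj : (PU 0 s t); last by rewrite del_out ?HPj ?mem0v.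
  move: (HPj) => /and3P [Hj Hst Hdeg]; have H01 := hb_inc Hj.
  have HW : PW 0 s (t - db 0)%N.
    rewrite /PW (std_mono Hst (leqnn _) (leq_subr _ _)) /=.
    by rewrite /db; lia.
  have E := A_eW HW; rewrite subnK /db in E; last by lia.
  by rewrite subr0 in E; rewrite -E; apply: Amap_img.
case HPj : (PU j.+1 s t); last by rewrite del_out ?HPj ?mem0v.
move: (HPj) => /and3P [Hj Hst Hdeg]; have H01 := hb_inc Hj.
have HW : PW j.+1 s (t - db j.+1)%N.
  rewrite /PW (std_mono Hst (leqnn _) (leq_subr _ _)) /=.
  by rewrite /db; lia.
have E := A_eW HW; rewrite subnK in E; last by rewrite /db; lia.
rewrite -(subrK (dU j (s + da j) (t - db j.+1)%N) (dU j.+1 s t)) -E.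
apply: memvD; first exact: Amap_img.
by apply: IH; rewrite /db; lia.
Qed.

Lemma dU_B d j s t : (m - j)%N = d -> (t < b j.+1)%N -> dU j s t \in limg Alin.
Proof.
elim: d j s t => [|d IH] j s t Hd Ht.
  by rewrite del_out ?mem0v // /PU; apply/negP => /and3P [Hj _ _]; lia.
case HPj : (PU j s t); last by rewrite del_out ?HPj ?mem0v.
move: (HPj) => /and3P [Hj Hst Hdeg]; have H01 := ha_dec Hj.
have HW : PW j.+1 (s - da j)%N t.
  rewrite /PW (std_mono Hst (leq_subr _ _) (leqnn _)) /=.
  by rewrite /da; lia.
have E := A_eW HW; rewrite subnK in E; last by rewrite /da; lia.
have -> : dU j s t = dU j.+1 (s - da j) (t + db j.+1) - Amap (eW j.+1 (s - da j) t).
  by rewrite E opprB addrC subrK.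
apply: memvB; last exact: Amap_img.
case HPj' : (PU j.+1 (s - da j) (t + db j.+1)); last by rewrite del_out ?HPj' ?mem0v.
move: HPj' => /and3P [Hj' _ _]; have := hb_inc Hj'.
by move=> H2; apply: IH; rewrite /db; lia.
Qed.

Lemma limg_full : limg Alin = fullv.
Proof.
apply/vspaceP => u; rewrite memvf; apply/idP.
rewrite (V_decomp u); apply: memv_suml => x _; apply: memvZ.
move: (idU x) => [[i s] t].
case: (leqP (b i.+1) t) => H; first exact: dU_A.
exact: (@dU_B (m - i)%N).
Qed.

Lemma dim_ker : (\dim (lker Alin) + #|{: @Idx m B PU}| = #|{: @Idx m.+1 B PW}|)%N.
Proof.
have := limg_ker_dim Alin fullv; rewrite capfv limg_full !dimV //.
Qed.

End Lin.

Section PhiDef.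
Variables (k : fieldType) (m : nat) (a b : nat -> nat).
Hypothesis ha_dec : forall i, (i < m)%N -> (a i.+1 < a i)%N.
Hypothesis ha_last : a m = 0%N.
Hypothesis hb_first : b 0%N = 0%N.
Hypothesis hb_inc : forall i, (i < m)%N -> (b i < b i.+1)%N.

Local Notation T := (T k).
Local Notation B := (B m a b).
Local Notation PW := (PW m a b).
Local Notation W := (@V k m.+1 B PW).
Local Notation extW := (@ext k m.+1 B PW).
Local Notation PU := (PU m a b).
Local Notation U := (@V k m B PU).
Local Notation idU := (@idx m B PU).
Local Notation std := (std m a b).
Local Notation inI := (@inI k m a b).
Local Notation congI := (@congI k m a b).
Local Notation Aval := (@Aval k m a b).
Local Notation Amap := (@Amap k m a b).

Definition cc (w : W) (i : nat) (nu xi : 'X_{1..2}) : k :=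
  if ((xi o0 <= nu o0 + a i) && (xi o1 <= nu o1 + b i))%N
  then extW w i (nu o0 + a i - xi o0)%N (nu o1 + b i - xi o1)%N else 0.

Definition pickg (xi : 'X_{1..2}) := [pick i : 'I_m.+1 | (gm a b i <= xi)%MM].

Definition Fw (w : W) (xi : 'X_{1..2}) : T :=
  if pickg xi is Some i then
    \sum_(s < B) \sum_(t < B) cc w i (mn s t) xi *: 'X_[mn s t]
  else 0.

Definition Phi (w : W) (p : T) : T := \sum_(xi <- msupp p) p@_xi *: Fw w xi.

Lemma mn_eq s t (nu : 'X_{1..2}) : (mn s t == nu) = (s == nu o0) && (t == nu o1).
Proof.
apply/eqP/andP => [<-|[/eqP -> /eqP ->]]; first by rewrite mn0 mn1.
by rewrite -mnE.
Qed.

Lemma coef_box (c : nat -> nat -> k) (nu : 'X_{1..2}) :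
  (nu o0 < B)%N -> (nu o1 < B)%N ->
  (\sum_(s < B) \sum_(t < B) c s t *: ('X_[mn s t] : T))@_nu = c (nu o0) (nu o1).
Proof.
move=> H0 H1; rewrite raddf_sum /= (bigD1 (Ordinal H0)) //= [X in _ + X]big1 ?addr0.
  rewrite raddf_sum /= (bigD1 (Ordinal H1)) //= [X in _ + X]big1 ?addr0.
    by rewrite mcoeffZ mcoeffX mn_eq !eqxx mulr1.
  move=> t Ht; rewrite mcoeffZ mcoeffX mn_eq eqxx /=.
  by rewrite -(inj_eq val_inj) /= in Ht; rewrite (negPf Ht) mulr0.
move=> s Hs; rewrite raddf_sum /= big1 // => t _; rewrite mcoeffZ mcoeffX mn_eq.
by rewrite -(inj_eq val_inj) /= in Hs; rewrite (negPf Hs) mulr0.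
Qed.

Lemma Phi_seq w p (r : seq 'X_{1..2}) : uniq r -> {subset msupp p <= r} ->
  Phi w p = \sum_(xi <- r) p@_xi *: Fw w xi.
Proof.
move=> Ur Hs.
have -> : \sum_(xi <- r) p@_xi *: Fw w xi = \sum_(xi <- r | xi \in msupp p) p@_xi *: Fw w xi.
  by rewrite [RHS]big_rmcond_in // => xi _ /memN_msupp_eq0 ->; rewrite scale0r.
rewrite /Phi -[RHS]big_filter; apply: perm_big; apply: uniq_perm.
- exact: msupp_uniq.
- exact: filter_uniq.
by move=> x; rewrite mem_filter; case H: (x \in msupp p) => //=; rewrite Hs.
Qed.

Lemma Phi_is_linear w : linear (Phi w).
Proof.
move=> c p q.
set r := undup (msupp p ++ msupp q).
have Ur : uniq r by apply: undup_uniq.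
have Sp : {subset msupp p <= r} by move=> x Hx; rewrite mem_undup mem_cat Hx.
have Sq : {subset msupp q <= r} by move=> x Hx; rewrite mem_undup mem_cat Hx orbT.
have Spq : {subset msupp (c *: p + q) <= r}.
  move=> x /msuppD_le; rewrite mem_cat => /orP [/msuppZ_le|]; [exact: Sp|exact: Sq].
rewrite (Phi_seq _ Ur Spq) (Phi_seq _ Ur Sp) (Phi_seq _ Ur Sq).
rewrite scaler_sumr -big_split /=; apply: eq_bigr => xi _.
by rewrite mcoeffD mcoeffZ scalerDl scalerA.
Qed.

HB.instance Definition _ (w : W) := GRing.isLinear.Build k T T *:%R (Phi w) (Phi_is_linear w).

Lemma Phi_X w xi : Phi w 'X_[xi] = Fw w xi.
Proof. by rewrite /Phi msuppX big_seq1 mcoeffX eqxx scale1r. Qed.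

Lemma cc_lin c w w' i nu xi : cc (c *: w + w') i nu xi = c * cc w i nu xi + cc w' i nu xi.
Proof. by rewrite /cc; case: ifP => _; rewrite ?ext_lin // mulr0 addr0. Qed.

Lemma Fw_lin c w w' xi : Fw (c *: w + w') xi = c *: Fw w xi + Fw w' xi.
Proof.
rewrite /Fw; case: pickg => [i|]; last by rewrite scaler0 addr0.
rewrite scaler_sumr -big_split; apply: eq_bigr => s _ /=.
rewrite scaler_sumr -big_split; apply: eq_bigr => t _ /=.
by rewrite cc_lin scalerDl scalerA.
Qed.

Definition PhiW (p : T) (w : W) : T := Phi w p.

Lemma PhiW_is_linear p : linear (PhiW p).
Proof.
move=> c w w'; rewrite /PhiW /Phi scaler_sumr -big_split; apply: eq_bigr => xi _ /=.
by rewrite Fw_lin scalerDr !scalerA mulrC.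
Qed.

HB.instance Definition _ (p : T) := GRing.isLinear.Build k W T *:%R (PhiW p) (PhiW_is_linear p).

Lemma Fw_coef w xi (nu : 'X_{1..2}) : stdm m a b nu ->
  (Fw w xi)@_nu = if pickg xi is Some i then cc w i nu xi else 0.
Proof.
move=> Hnu; have [H0 H1] := std_bound ha_last hb_first Hnu.
rewrite /Fw; case: pickg => [i|]; last by rewrite mcoeff0.
by rewrite (coef_box (fun s t => cc w i (mn s t) xi)) -?mnE // /B; lia.
Qed.

Lemma Aval0 w j s t : Amap w = 0 -> PU j s t -> Aval w j s t = 0.
Proof.
move=> HA H; have [y Hy] := idx_ex (HPU ha_last hb_first) H.
by have := congr1 (fun f : U => f y) HA; rewrite !ffunE Hy.
Qed.

Lemma gm_le i (xi : 'X_{1..2}) : (gm a b i <= xi)%MM = (a i <= xi o0)%N && (b i <= xi o1)%N.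
Proof. by rewrite lemP /gm mn0 mn1. Qed.

Lemma cc_adj w j nu xi : Amap w = 0 -> (j < m)%N -> (gm a b j <= xi)%MM ->
  (gm a b j.+1 <= xi)%MM -> stdm m a b nu -> cc w j nu xi = cc w j.+1 nu xi.
Proof.
move=> HA Hj; rewrite !gm_le => /andP [Ha1 Hb1] /andP [Ha2 Hb2] Hnu.
have Hda := ha_dec Hj; have Hdb := hb_inc Hj.
rewrite /cc.
set n0 := nu o0; set n1 := nu o1; set x0 := xi o0; set x1 := xi o1.
rewrite -/n0 -/n1 -/x0 -/x1 in Ha1 Hb1 Ha2 Hb2 Hnu.
case HC : ((x0 <= n0 + a j) && (x1 <= n1 + b j.+1))%N; last first.
  case: ifP => H1; first by move: HC H1; lia.
  by case: ifP => H2 //; move: HC H2; lia.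
case HD : (a j + b j.+1 < (n0 + a j - x0) + (n1 + b j.+1 - x1))%N; last first.
  case: ifP => H1; case: ifP => H2; rewrite ?(ext_out w) //;
    rewrite /PW; apply/negP => /and3P [_ _]; move: HC HD H1 H2; lia.
have HPUj : PU j (n0 + a j - x0) (n1 + b j.+1 - x1).
  rewrite /PU Hj HD andbT /=; apply: std_mono Hnu _ _; lia.
have := Aval0 HA HPUj; rewrite /Aval /db /da.
move/eqP; rewrite subr_eq0 => /eqP.
have I1 : (x1 <= n1 + b j)%N -> (n1 + b j.+1 - x1 - (b j.+1 - b j) = n1 + b j - x1)%N.
  by move: HC; lia.
have I2 : (x0 <= n0 + a j.+1)%N -> (n0 + a j - x0 - (a j - a j.+1) = n0 + a j.+1 - x0)%N.
  by move: HC; lia.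
case: ifP => H3; case: ifP => H4; case: ifP => H1; case: ifP => H2 => E //;
  try (by move: HC H1 H2 H3 H4; lia).
- move: E; rewrite I1 ?I2 //; by move: HC H1 H2; lia.
- move: E; rewrite I1 //; by move: HC H1; lia.
- move: E; rewrite I2 //; by move: HC H2; lia.
Qed.

End PhiDef.


Section PhiHom.
Variables (k : fieldType) (m : nat) (a b : nat -> nat).
Hypothesis ha_dec : forall i, (i < m)%N -> (a i.+1 < a i)%N.
Hypothesis ha_last : a m = 0%N.
Hypothesis hb_first : b 0%N = 0%N.
Hypothesis hb_inc : forall i, (i < m)%N -> (b i < b i.+1)%N.

Local Notation T := (T k).
Local Notation B := (B m a b).
Local Notation PW := (PW m a b).
Local Notation W := (@V k m.+1 B PW).
Local Notation extW := (@ext k m.+1 B PW).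
Local Notation PU := (PU m a b).
Local Notation U := (@V k m B PU).
Local Notation std := (std m a b).
Local Notation inI := (@inI k m a b).
Local Notation congI := (@congI k m a b).
Local Notation isHom := (@isHom k m a b).
Local Notation Aval := (@Aval k m a b).
Local Notation Amap := (@Amap k m a b).
Local Notation cc := (@cc k m a b).
Local Notation Fw := (@Fw k m a b).
Local Notation Phi := (@Phi k m a b).
Local Notation pickg := (@pickg m a b).

Lemma cc_WD_aux w nu xi d : Amap w = 0 -> stdm m a b nu ->
  forall i, (i + d <= m)%N -> (gm a b i <= xi)%MM -> (gm a b (i + d) <= xi)%MM ->
  cc w i nu xi = cc w (i + d) nu xi.
Proof.
move=> HA Hnu; elim: d => [|d IH] i Hid Hi Hid'; first by rewrite addn0.
have Hd : (gm a b (i + d) <= xi)%MM.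
  move: Hi Hid'; rewrite !gm_le => /andP [H1 H2] /andP [H3 H4].
  rewrite (leq_trans (a_le ha_dec (leq_addr d i) _) H1) ?(leq_trans (b_le hb_inc _ _) H4) //;
   lia.
rewrite (IH i _ Hi Hd); last by lia.
rewrite addnS; apply: (cc_adj ha_dec ha_last hb_first hb_inc) => //; first by lia.
by rewrite -addnS.
Qed.

Lemma cc_WD w nu xi i i' : Amap w = 0 -> stdm m a b nu -> (i <= m)%N -> (i' <= m)%N ->
  (gm a b i <= xi)%MM -> (gm a b i' <= xi)%MM -> cc w i nu xi = cc w i' nu xi.
Proof.
move=> HA Hnu Hi Hi' H1 H2.
case: (leqP i i') => Hii'.
  have := @cc_WD_aux w nu xi (i' - i) HA Hnu i; rewrite subnKC //; apply => //.
have := @cc_WD_aux w nu xi (i - i') HA Hnu i'; rewrite subnKC ?(ltnW Hii') //.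
by move=> H; rewrite H.
Qed.


Lemma pick_some (xi : 'X_{1..2}) : (gm a b 0 <= xi)%MM \/ ~~ stdm m a b xi ->
  exists i : 'I_m.+1, pickg xi = Some i /\ (gm a b i <= xi)%MM.
Proof.
move=> H.
have [i Hi] : exists i : 'I_m.+1, (gm a b i <= xi)%MM.
  case: H => [H|]; first by exists ord0.
  by rewrite /stdm negbK => /monoInIP [i]; rewrite -mnE => Hi; exists i.
rewrite /pickg; case: pickP => [j Hj|Hn]; first by exists j.
by move: (Hn i); rewrite Hi.
Qed.

Lemma pick_some' (xi : 'X_{1..2}) : ~~ stdm m a b xi ->
  exists i : 'I_m.+1, pickg xi = Some i /\ (gm a b i <= xi)%MM.
Proof. by move=> H; apply: pick_some; right. Qed.

Lemma KeyF w (u xi : 'X_{1..2}) : Amap w = 0 -> ~~ stdm m a b xi ->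
  congI (Fw w (u + xi)) ('X_[u] * Fw w xi).
Proof.
move=> HA Hxi; have [i0 [P0 G0]] := pick_some' Hxi.
have Hxi' : ~~ stdm m a b (u + xi)%MM.
  move: Hxi; rewrite /stdm !negbK => /existsP [i /andP [H1 H2]]; apply/existsP; exists i.
  by rewrite !mnmDE; apply/andP; split; lia.
have [i1 [P1 G1]] := pick_some' Hxi'.
apply: coef_congI => nu Hnu.
rewrite (Fw_coef ha_last hb_first) // P1 mulrC mcoeffMX'.
have G0' : (gm a b i0 <= u + xi)%MM.
  by move: G0; rewrite !gm_le !mnmDE => /andP [H1 H2]; apply/andP; split; lia.
rewrite (cc_WD HA Hnu (ltnSE (ltn_ord i1)) (ltnSE (ltn_ord i0)) G1 G0').
move: G0; rewrite gm_le => /andP [H1 H2].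
case: ifP => Hu.
  have Hnu' : stdm m a b (nu - u)%MM.
    by move: Hnu; rewrite /stdm => Hs; apply: std_mono Hs _ _; rewrite mnmBE leq_subr.
  rewrite (Fw_coef ha_last hb_first) // P0.
  move: Hu; rewrite lemP => /andP [Hu0 Hu1].
  rewrite /cc !mnmDE !mnmBE.
  case: ifP => C1; case: ifP => C2 //; try (by move: C1 C2; lia).
  by congr (ext _ _ _ _); lia.
rewrite /cc !mnmDE; case: ifP => C1 //.
by move: Hu; rewrite lemP; move: C1 H1 H2; lia.
Qed.

Lemma Phi_sum w (I : Type) (r : seq I) (F : I -> T) :
  Phi w (\sum_(i <- r) F i) = \sum_(i <- r) Phi w (F i).
Proof. exact: raddf_sum. Qed.

Lemma Phi_Z w (c : k) p : Phi w (c *: p) = c *: Phi w p.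
Proof. exact: linearZ. Qed.

Lemma Phi_mul w (c p : T) :
  Phi w (c * p) = \sum_(u <- msupp c) \sum_(xi <- msupp p) (c@_u * p@_xi) *: Fw w (u + xi)%MM.
Proof.
rewrite {1}(mpolyE c) {1}(mpolyE p) mulr_suml Phi_sum; apply: eq_bigr => u _.
rewrite mulr_sumr Phi_sum; apply: eq_bigr => xi _.
by rewrite -scalerAl -scalerAr scalerA -mpolyXD Phi_Z Phi_X.
Qed.

Lemma mul_Phi w (c p : T) :
  c * Phi w p = \sum_(u <- msupp c) \sum_(xi <- msupp p) (c@_u * p@_xi) *: ('X_[u] * Fw w xi).
Proof.
rewrite {1}(mpolyE c) mulr_suml /Phi; apply: eq_bigr => u _.
rewrite mulr_sumr; apply: eq_bigr => xi _.
by rewrite -scalerAl -scalerAr scalerA.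
Qed.

Lemma Phi_hom w : Amap w = 0 -> isHom (Phi w).
Proof.
move=> HA; split.
  by move=> p q _ _; rewrite raddfD; apply: congI_refl.
move=> c p Hp; rewrite Phi_mul mul_Phi; apply: congI_sum => u _.
rewrite big_seq [X in congI _ X]big_seq; apply: congI_sum => xi Hxi.
apply: congI_scale; apply: KeyF => //.
apply/negP => Hs; move: Hxi; rewrite mcoeff_msupp (KL1 Hp Hs) eqxx //.
Qed.

End PhiHom.


Lemma mdeg2 (mu : 'X_{1..2}) : mdeg mu = (mu o0 + mu o1)%N.
Proof.
rewrite mdegE big_ord_recr /= big_ord_recr /= big_ord0 add0n.
by congr (_ + _)%N; congr (mu _); apply/val_inj.
Qed.

Lemma homog_sum (k : fieldType) (I : Type) (r : seq I) (P : pred I) (F : I -> {mpoly k[2]}) e :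
  (forall i, P i -> F i \is e.-homog) -> \sum_(i <- r | P i) F i \is e.-homog.
Proof.
move=> H; elim/big_ind: _ => //; first exact: dhomog0.
by move=> x y Hx Hy; apply: dhomogD.
Qed.

Section Deg.
Variables (k : fieldType) (m : nat) (a b : nat -> nat).
Hypothesis ha_dec : forall i, (i < m)%N -> (a i.+1 < a i)%N.
Hypothesis ha_last : a m = 0%N.
Hypothesis hb_first : b 0%N = 0%N.
Hypothesis hb_inc : forall i, (i < m)%N -> (b i < b i.+1)%N.

Local Notation T := (T k).
Local Notation B := (B m a b).
Local Notation PW := (PW m a b).
Local Notation W := (@V k m.+1 B PW).
Local Notation extW := (@ext k m.+1 B PW).
Local Notation idW := (@idx m.+1 B PW).
Local Notation PU := (PU m a b).
Local Notation U := (@V k m B PU).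
Local Notation idU := (@idx m B PU).
Local Notation std := (std m a b).
Local Notation inI := (@inI k m a b).
Local Notation congI := (@congI k m a b).
Local Notation isHom := (@isHom k m a b).
Local Notation isHomDeg := (@isHomDeg k m a b).
Local Notation isHomPos := (@isHomPos k m a b).
Local Notation Aval := (@Aval k m a b).
Local Notation Amap := (@Amap k m a b).
Local Notation cc := (@cc k m a b).
Local Notation Fw := (@Fw k m a b).
Local Notation Phi := (@Phi k m a b).
Local Notation pickg := (@pickg m a b).

Definition wdeg (d : nat) (w : W) : W :=
  [ffun x => if ((idW x).1.2 + (idW x).2 == a (idW x).1.1 + b (idW x).1.1 + d.+1)%N
             then w x else 0].

Lemma ext_wdeg d w i s t :
  extW (wdeg d w) i s t = if (s + t == a i + b i + d.+1)%N then extW w i s t else 0.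
Proof.
case HP : (PW i s t); last by rewrite !ext_out ?HP ?if_same.
have [x Hx] := idx_ex (HPW ha_last hb_first) HP.
by rewrite !(ext_id _ Hx) ffunE Hx.
Qed.

Lemma Amap_wdeg d w : Amap w = 0 -> Amap (wdeg d w) = 0.
Proof.
move=> HA; apply/ffunP => y; rewrite !ffunE.
move: (idx_P y); move: (idU y) => [[j s] t] /= HP.
have E := Aval0 ha_last hb_first HA HP.
move: HP => /and3P [Hj _ _]; have H1 := ha_dec Hj; have H2 := hb_inc Hj.
move: E; rewrite /Aval !ext_wdeg /db /da.
case C1 : (b j.+1 - b j <= t)%N; case C3 : (a j - a j.+1 <= s)%N;
case C2 : (s + (t - (b j.+1 - b j)) == a j + b j + d.+1)%N;
case C4 : (s - (a j - a j.+1) + t == a j.+1 + b j.+1 + d.+1)%N => E;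
  rewrite ?subrr ?subr0 ?sub0r ?oppr0 //; try (by move: C1 C2 C3 C4; lia).
all: by move: E; rewrite ?subr0 ?sub0r.
Qed.

Lemma Phi_homog d w (p : T) e : p \is e.-homog ->
  Phi (wdeg d w) p \is (e + d.+1)%N.-homog.
Proof.
move=> Hp; rewrite /Phi big_seq; elim/big_rec: _ => [|xi y Hxi Hy]; first exact: dhomog0.
apply: dhomogD => //; apply: dhomogZ.
have Hxe : mdeg xi = e by apply: (dhomog_mf Hp).
rewrite /Fw; case: pickg => [i|]; last exact: dhomog0.
elim/big_rec: _ => [|s y2 _ Hy2]; first exact: dhomog0.
apply: dhomogD => //.
elim/big_rec: _ => [|t z _ Hz]; first exact: dhomog0.
apply: dhomogD => //.
case E : (cc (wdeg d w) i (mn s t) xi == 0).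
  by rewrite (eqP E) scale0r dhomog0.
apply: dhomogZ; rewrite dhomogX; apply/eqP; apply: etrans (mdeg2 (mn s t)) _.
move: Hxe => /(etrans (esym (mdeg2 xi))) Hxe.
move: E; rewrite /cc !mn0 !mn1; case: ifP => C; last by rewrite eqxx.
rewrite ext_wdeg; case: ifP => C2; last by rewrite eqxx.
by move=> _; move: C C2 Hxe; lia.
Qed.

Lemma Phi_wdeg_hom d w : Amap w = 0 -> isHomDeg d.+1 (Phi (wdeg d w)).
Proof.
move=> HA; split; first exact/Phi_hom/Amap_wdeg.
move=> e p _ Hp; exists (Phi (wdeg d w) p); split; last exact: congI_refl.
exact: Phi_homog.
Qed.

Lemma PhiW_sum p (I : Type) (r : seq I) (F : I -> W) :
  Phi (\sum_(i <- r) F i) p = \sum_(i <- r) Phi (F i) p.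
Proof. exact: (raddf_sum (PhiW p)). Qed.

Lemma PhiW_Z p (c : k) w : Phi (c *: w) p = c *: Phi w p.
Proof. exact: (linearZ_LR (PhiW p)). Qed.

Lemma w_decomp w : w = \sum_(d < 2 * B) wdeg d w.
Proof.
apply/ffunP => x; rewrite sum_ffunE.
move: (idx_P x); rewrite /wdeg.
under eq_bigr do rewrite ffunE.
move: (idW x) => [[i s] t] /= /and3P [Hi Hs Hdeg].
have [H0 H1] := std_bound ha_last hb_first Hs.
have Hd : ((s + t - (a i + b i)).-1 < 2 * B)%N by rewrite /B; lia.
rewrite (bigD1 (Ordinal Hd)) //= big1 ?addr0.
  by case: ifP => // C; move: C Hdeg; lia.
move=> d Hd'; case: ifP => // C; move: Hd'; rewrite -(inj_eq val_inj) /=.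
by move: C Hdeg; lia.
Qed.

Lemma Phi_pos w : Amap w = 0 -> isHomPos (Phi w).
Proof.
move=> HA; exists (2 * B)%N, (fun d => Phi (wdeg d w)); split.
  by move=> d; apply: Phi_wdeg_hom.
move=> p _; rewrite {1}(w_decomp w) PhiW_sum; exact: congI_refl.
Qed.

End Deg.


Section Extract.
Variables (k : fieldType) (m : nat) (a b : nat -> nat).
Hypothesis ha_dec : forall i, (i < m)%N -> (a i.+1 < a i)%N.
Hypothesis ha_last : a m = 0%N.
Hypothesis hb_first : b 0%N = 0%N.
Hypothesis hb_inc : forall i, (i < m)%N -> (b i < b i.+1)%N.

Local Notation T := (T k).
Local Notation B := (B m a b).
Local Notation PW := (PW m a b).
Local Notation W := (@V k m.+1 B PW).
Local Notation extW := (@ext k m.+1 B PW).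
Local Notation idW := (@idx m.+1 B PW).
Local Notation PU := (PU m a b).
Local Notation U := (@V k m B PU).
Local Notation idU := (@idx m B PU).
Local Notation std := (std m a b).
Local Notation inI := (@inI k m a b).
Local Notation congI := (@congI k m a b).
Local Notation isHom := (@isHom k m a b).
Local Notation isHomDeg := (@isHomDeg k m a b).
Local Notation isHomPos := (@isHomPos k m a b).
Local Notation Aval := (@Aval k m a b).
Local Notation Amap := (@Amap k m a b).
Local Notation cc := (@cc k m a b).
Local Notation Fw := (@Fw k m a b).
Local Notation Phi := (@Phi k m a b).
Local Notation pickg := (@pickg m a b).
Local Notation mono := (@mono k).

Lemma inIgen' i : (i <= m)%N -> inI (mono (a i) (b i)).
Proof. by move=> Hi; apply: (@inIgen k m a b (Ordinal (Hi : (i < m.+1)%N))). Qed.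

Lemma Pos_hom phi : isHomPos phi -> isHom phi.
Proof.
move=> [D [psi [Hpsi Hsum]]]; split.
  move=> p q Hp Hq; apply: congI_trans (Hsum _ (inID Hp Hq)) _.
  have S1 : congI (\sum_(d < D) psi d (p + q)) (\sum_(d < D) (psi d p + psi d q)).
    by apply: congI_sum => d _; exact: ((Hpsi d).1).1 p q Hp Hq.
  apply: congI_trans S1 _.
  rewrite big_split /=.
  exact: congI_add (congI_sym (Hsum p Hp)) (congI_sym (Hsum q Hq)).
move=> c p Hp; apply: congI_trans (Hsum _ (inIM c Hp)) _.
have S1 : congI (\sum_(d < D) psi d (c * p)) (\sum_(d < D) (c * psi d p)).
  by apply: congI_sum => d _; exact: ((Hpsi d).1).2 c p Hp.
apply: congI_trans S1 _.
rewrite -mulr_sumr; apply: congI_mul; exact: congI_sym (Hsum p Hp).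
Qed.

Lemma Pos0 phi i (nu : 'X_{1..2}) : isHomPos phi -> (i <= m)%N ->
  (mdeg nu <= a i + b i)%N -> stdm m a b nu -> (phi (mono (a i) (b i)))@_nu = 0.
Proof.
move=> [D [psi [Hpsi Hsum]]] Hi Hdeg Hnu.
rewrite (congI_coef (Hsum _ (inIgen' Hi)) Hnu) raddf_sum big1 // => d _.
have Hg : mono (a i) (b i) \is (a i + b i)%N.-homog.
  rewrite monoX dhomogX; apply/eqP; apply: etrans (mdeg2 _) _; by rewrite mn0 mn1.
have [q [Hq Hc]] := (Hpsi d).2 _ _ (inIgen' Hi) Hg.
apply: etrans (congI_coef Hc Hnu) _; apply: dhomog_nemf_coeff Hq _.
by apply/negP => /eqP E; move: Hdeg; rewrite E; lia.
Qed.

Lemma pick_of (i : nat) (xi : 'X_{1..2}) : (i <= m)%N -> (gm a b i <= xi)%MM ->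
  exists i0 : 'I_m.+1, pickg xi = Some i0 /\ (gm a b i0 <= xi)%MM.
Proof.
move=> Hi H; rewrite /pickg; case: pickP => [j Hj|Hn]; first by exists j.
by move: (Hn (Ordinal (Hi : (i < m.+1)%N))) => /=; rewrite H.
Qed.

Lemma coefPhi_gen w i (nu : 'X_{1..2}) : Amap w = 0 -> (i <= m)%N -> stdm m a b nu ->
  (Phi w (mono (a i) (b i)))@_nu = extW w i (nu o0) (nu o1).
Proof.
move=> HA Hi Hnu; rewrite monoX. rewrite Phi_X. rewrite (Fw_coef ha_last hb_first) //.
have Hle : (gm a b i <= mn (a i) (b i))%MM by rewrite /gm lemP !leqnn.
have [i0 [P0 G0]] := pick_of Hi Hle; rewrite P0.
rewrite (cc_WD ha_dec ha_last hb_first hb_inc HA Hnu (ltnSE (ltn_ord i0)) Hi G0 Hle).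
by rewrite /cc !mn0 !mn1 !leq_addl /= !addnK.
Qed.

Lemma Phi_inj w : Amap w = 0 -> (forall p, inI p -> congI (Phi w p) 0) -> w = 0.
Proof.
move=> HA H; apply/ffunP => x; rewrite [RHS]ffunE.
have Hx := idx_P x.
set i := (val x).1.1; set s := (val x).1.2; set t := (val x).2.
have E : idW x = (nat_of_ord i, nat_of_ord s, nat_of_ord t) by [].
rewrite -(ext_id w E).
have Hi : (i <= m)%N by rewrite -ltnS.
have Hst : stdm m a b (mn s t) by rewrite /stdm mn0 mn1; case/and3P: Hx.
have := coefPhi_gen HA Hi Hst; rewrite mn0 mn1 => <-.
by rewrite (congI_coef (H _ (inIgen' Hi)) Hst) mcoeff0.
Qed.

End Extract.


Section Extract2.
Variables (k : fieldType) (m : nat) (a b : nat -> nat).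
Hypothesis ha_dec : forall i, (i < m)%N -> (a i.+1 < a i)%N.
Hypothesis ha_last : a m = 0%N.
Hypothesis hb_first : b 0%N = 0%N.
Hypothesis hb_inc : forall i, (i < m)%N -> (b i < b i.+1)%N.

Local Notation T := (T k).
Local Notation B := (B m a b).
Local Notation PW := (PW m a b).
Local Notation W := (@V k m.+1 B PW).
Local Notation extW := (@ext k m.+1 B PW).
Local Notation idW := (@idx m.+1 B PW).
Local Notation PU := (PU m a b).
Local Notation U := (@V k m B PU).
Local Notation idU := (@idx m B PU).
Local Notation std := (std m a b).
Local Notation inI := (@inI k m a b).
Local Notation congI := (@congI k m a b).
Local Notation isHom := (@isHom k m a b).
Local Notation isHomPos := (@isHomPos k m a b).
Local Notation Aval := (@Aval k m a b).
Local Notation Amap := (@Amap k m a b).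
Local Notation Phi := (@Phi k m a b).
Local Notation mono := (@mono k).

Definition wof (phi : T -> T) : W :=
  [ffun x => (phi (mono (a (idW x).1.1) (b (idW x).1.1)))@_(mn (idW x).1.2 (idW x).2)].

Lemma ext_wof phi i s t : PW i s t -> extW (wof phi) i s t = (phi (mono (a i) (b i)))@_(mn s t).
Proof.
move=> H; have [x Hx] := idx_ex (HPW ha_last hb_first) H.
by rewrite (ext_id _ Hx) ffunE Hx.
Qed.

Lemma mnD s t s' t' : (mn s t + mn s' t')%MM = mn (s + s') (t + t').
Proof. by apply/mnmP => i; rewrite mnmDE; case: (I2_cases i) => ->; rewrite !(mn0, mn1). Qed.

Lemma mnB s t s' t' : (mn s t - mn s' t')%MM = mn (s - s') (t - t').
Proof. by apply/mnmP => i; rewrite mnmBE; case: (I2_cases i) => ->; rewrite !(mn0, mn1). Qed.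

Lemma coefXmul (f : T) s0 t0 s t :
  ('X_[mn s0 t0] * f)@_(mn s t) =
  if ((s0 <= s) && (t0 <= t))%N then f@_(mn (s - s0) (t - t0)) else 0.
Proof. by rewrite mulrC mcoeffMX' lemP !mn0 !mn1 mnB. Qed.

Lemma Amap_wof phi : isHomPos phi -> Amap (wof phi) = 0.
Proof.
move=> Hphi; have hom := Pos_hom Hphi.
apply/ffunP => y; rewrite [RHS]ffunE ffunE.
move: (idx_P y); move: (idU y) => [[j s] t] /= HP.
move: (HP) => /and3P [Hj Hs Hdeg]; have H1 := ha_dec Hj; have H2 := hb_inc Hj.
have L1 : mono (a j) (b j.+1) = 'X_[mn 0 (db b j)] * mono (a j) (b j).
  by rewrite !monoX -mpolyXD mnD add0n /db subnK //; lia.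
have L2 : mono (a j) (b j.+1) = 'X_[mn (da a j) 0] * mono (a j.+1) (b j.+1).
  by rewrite !monoX -mpolyXD mnD add0n /da subnK //; lia.
have C1 := hom.2 ('X_[mn 0 (db b j)]) _ (@inIgen' k m a b _ (ltnW Hj)).
have C2 := hom.2 ('X_[mn (da a j) 0]) _ (@inIgen' k m a b _ Hj).
rewrite -L1 in C1; rewrite -L2 in C2.
have Hst : stdm m a b (mn s t) by rewrite /stdm mn0 mn1.
have E1 := congI_coef C1 Hst; have E2 := congI_coef C2 Hst.
rewrite coefXmul leq0n /= in E1; rewrite coefXmul leq0n andbT in E2.
rewrite !subn0 in E1 E2.
rewrite /Aval.
have T1 : (if (db b j <= t)%N then extW (wof phi) j s (t - db b j)%N else 0) =
          (phi (mono (a j) (b j.+1)))@_(mn s t).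
  rewrite E1; case: ifP => // C; rewrite ext_wof // /PW /db (ltnW Hj) /=.
  rewrite (std_mono Hs (leqnn _) (leq_subr _ _)) /=.
  by move: C; rewrite /db; lia.
have T2 : (if (da a j <= s)%N then extW (wof phi) j.+1 (s - da a j)%N t else 0) =
          (phi (mono (a j) (b j.+1)))@_(mn s t).
  rewrite E2; case: ifP => // C; rewrite ext_wof // /PW /da Hj /=.
  rewrite (std_mono Hs (leq_subr _ _) (leqnn _)) /=.
  by move: C; rewrite /da; lia.
by rewrite T1 T2 subrr.
Qed.

Lemma Extract phi : isHomPos phi ->
  exists w, Amap w = 0 /\ forall p, inI p -> congI (phi p) (Phi w p).
Proof.
move=> Hphi; exists (wof phi); have HA := Amap_wof Hphi; split => //.
apply: hom_agree (Pos_hom Hphi) (Phi_hom ha_dec ha_last hb_first hb_inc HA) _ => i.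
apply: coef_congI => nu Hnu.
have Hi : (i <= m)%N by rewrite -ltnS.
rewrite (coefPhi_gen ha_dec ha_last hb_first hb_inc HA Hi Hnu).
case HP : (PW i (nu o0) (nu o1)); first by rewrite ext_wof // -mnE.
rewrite ext_out ?HP //; apply: (Pos0 ha_last hb_first Hphi Hi) => //.
have Hs : std (nu o0) (nu o1) := Hnu.
rewrite mdeg2; move: HP; rewrite /PW Hi Hs /=; lia.
Qed.

End Extract2.


Local Close Scope ring_scope.

Lemma diag (F : nat -> nat -> nat) N :
  \sum_(0 <= s < N) \sum_(0 <= t < N - s) F s t =
  \sum_(0 <= x < N) \sum_(0 <= s < x.+1) F s (x - s).
Proof.
elim: N => [|N IH]; first by rewrite !big_geq.
rewrite big_nat_recr //= [RHS]big_nat_recr //= -IH.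
rewrite [in RHS]big_nat_recr //= subnn.
have -> : \sum_(0 <= s < N) \sum_(0 <= t < N.+1 - s) F s t =
          \sum_(0 <= s < N) (\sum_(0 <= t < N - s) F s t + F s (N - s)).
  apply: eq_big_nat => s /andP [_ Hs].
  by rewrite subSn ?(ltnW Hs) // big_nat_recr.
rewrite big_split /= subSnn big_nat1.
by rewrite addnA.
Qed.

Lemma sq_to_tri (F : nat -> nat -> nat) B :
  (forall s t, (B <= s + t)%N -> F s t = 0) ->
  \sum_(0 <= s < B) \sum_(0 <= t < B) F s t =
  \sum_(0 <= s < B) \sum_(0 <= t < B - s) F s t.
Proof.
move=> HF; apply: eq_big_nat => s /andP [_ Hs].
rewrite (big_cat_nat (n := B - s)) ?leq_subr //= [X in _ + X]big1_seq ?addn0 //.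
move=> t /andP [_]; rewrite mem_index_iota => /andP [Ht _]; apply: HF; lia.
Qed.

Lemma card_Idx n B (P : nat -> nat -> nat -> bool) :
  #|{: Idx n B P}| = \sum_(i < n) \sum_(s < B) \sum_(t < B) (P i s t : nat).
Proof.
rewrite /Idx card_sig -(sum1_card [pred x : 'I_n * 'I_B * 'I_B | P x.1.1 x.1.2 x.2]) big_mkcond /=.
rewrite [RHS]pair_bigA [RHS]pair_bigA /=.
by apply: eq_bigr => [[[i s] t]] _ /=; rewrite inE; case: (P _ _ _).
Qed.

Section Count.
Variables (m : nat) (a b : nat -> nat).
Hypothesis ha_last : a m = 0%N.
Hypothesis hb_first : b 0%N = 0%N.

Local Notation std := (std m a b).
Local Notation B := (B m a b).

Lemma lambdaE x : lambdaI m a b x = \sum_(0 <= s < x.+1) (std s (x - s) : nat).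
Proof.
rewrite /lambdaI cardsE -sum1_card big_mkcond /= big_mkord.
by apply: eq_bigr => s _; rewrite unfold_in /std; case: (monoInI _ _ _ _ _).
Qed.

Lemma count_tail u :
  \sum_(s < B) \sum_(t < B) ((std s t && (u < s + t))%N : nat) = tailI m a b u.
Proof.
have -> : \sum_(s < B) \sum_(t < B) ((std s t && (u < s + t))%N : nat) =
          \sum_(0 <= s < B) \sum_(0 <= t < B) ((std s t && (u < s + t))%N : nat).
  by rewrite big_mkord; apply: eq_bigr => s _; rewrite big_mkord.
rewrite sq_to_tri; last first.
  move=> s t Hst; case Hs: (std s t) => //=.
  have [H1 H2] := std_bound ha_last hb_first Hs; move: Hst; rewrite /B; lia.
rewrite diag /tailI.
have -> : \sum_(0 <= x < B) \sum_(0 <= s < x.+1) ((std s (x - s) && (u < s + (x - s)))%N : nat)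
        = \sum_(0 <= x < B) ((u < x)%N * lambdaI m a b x)%N.
  apply: eq_big_nat => x _; rewrite lambdaE big_distrr /=; apply: eq_big_nat => s /andP [_ Hs].
  have -> : (s + (x - s) = x)%N by lia.
  by case: (std _ _); case: (u < x)%N.
case: (leqP u.+1 B) => Hu.
  rewrite (big_cat_nat (n := u.+1)) //= big1_seq ?add0n.
    apply: eq_big_nat => x /andP [Hx _]; by rewrite Hx mul1n.
  by move=> x /andP [_]; rewrite mem_index_iota => /andP [_ Hx]; rewrite ltnNge -ltnS Hx.
rewrite [RHS]big_geq ?(ltnW Hu) // big1_seq // => x /andP [_]; rewrite mem_index_iota => /andP [_ Hx].
by have -> : (u < x)%N = false by lia.
Qed.

End Count.


Local Open Scope ring_scope.

Section Final.
Variables (k : fieldType) (m : nat) (a b : nat -> nat).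
Hypothesis ha_dec : forall i, (i < m)%N -> (a i.+1 < a i)%N.
Hypothesis ha_last : a m = 0%N.
Hypothesis hb_first : b 0%N = 0%N.
Hypothesis hb_inc : forall i, (i < m)%N -> (b i < b i.+1)%N.

Local Notation T := (T k).
Local Notation B := (B m a b).
Local Notation PW := (PW m a b).
Local Notation W := (@V k m.+1 B PW).
Local Notation PU := (PU m a b).
Local Notation inI := (@inI k m a b).
Local Notation congI := (@congI k m a b).
Local Notation isHomPos := (@isHomPos k m a b).
Local Notation Amap := (@Amap k m a b).
Local Notation Phi := (@Phi k m a b).
Local Notation Alin := (@Alin k m a b).

Lemma card_IW : #|{: @Idx m.+1 B PW}| = sumM m a b.
Proof.
rewrite card_Idx /sumM; apply: eq_bigr => i _.
rewrite -(count_tail ha_last hb_first); apply: eq_bigr => s _; apply: eq_bigr => t _.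
by rewrite /PW -ltnS ltn_ord.
Qed.

Lemma card_IU : #|{: @Idx m B PU}| = sumR m a b.
Proof.
rewrite card_Idx /sumR; apply: eq_bigr => i _.
rewrite -(count_tail ha_last hb_first); apply: eq_bigr => s _; apply: eq_bigr => t _.
by rewrite /PU ltn_ord.
Qed.

Lemma inK w : (w \in lker Alin) = (Amap w == 0).
Proof. by rewrite memv_ker AlinE. Qed.

Theorem main_dim : exists n : nat,
    @hasdimI k m a b isHomPos n /\ (n%:Z = (sumM m a b)%:Z - (sumR m a b)%:Z)%R.
Proof.
set K := lker Alin.
set bas := vbasis K.
have HbK : forall i : 'I_(\dim K), Amap bas`_i = 0.
  move=> i; apply/eqP; rewrite -inK; apply: vbasis_mem; apply: mem_nth.
  by rewrite size_tuple.
exists (\dim K); split; last first.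
  have := dim_ker k ha_dec ha_last hb_first hb_inc.
  rewrite card_IW card_IU -/K => <-.
  by rewrite PoszD addrK.
exists (fun i => Phi bas`_i); split; [|split].
- by move=> i; apply: (Phi_pos ha_dec ha_last hb_first hb_inc); apply: HbK.
- move=> c H.
  set v := \sum_(i < \dim K) c i *: bas`_i.
  have Hv : Amap v = 0.
    apply/eqP; rewrite -inK; apply: memv_suml => i _; apply: memvZ.
    by rewrite inK HbK.
  have Hv0 : v = 0.
    apply: (Phi_inj ha_dec ha_last hb_first hb_inc Hv) => p Hp.
    rewrite /v PhiW_sum.
    have := H p Hp; congr congI; apply: eq_bigr => i _; by rewrite PhiW_Z.
  by move: (basis_free (vbasisP K)) => /freeP; apply.
- move=> phi Hphi; have [w [HA Hw]] := Extract ha_dec ha_last hb_first hb_inc Hphi.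
  exists (fun i => coord bas i w) => p Hp.
  have HwK : w \in K by rewrite inK HA.
  apply: congI_trans (Hw p Hp) _.
  rewrite {1}(coord_vbasis HwK) PhiW_sum; apply: congI_sum => i _.
  rewrite PhiW_Z; exact: congI_refl.
Qed.

End Final.


Local Close Scope ring_scope.
Unset Implicit Arguments.
Set Strict Implicit.

Theorem proposition4p1 (k : closedFieldType) (m : nat) (a b : nat -> nat)
  (ha_dec : forall i, (i < m)%N -> (a i.+1 < a i)%N)
  (ha_last : a m = 0%N)
  (hb_first : b 0%N = 0%N)
  (hb_inc : forall i, (i < m)%N -> (b i < b i.+1)%N) :
  exists n : nat,
    @hasdimI k m a b (@isHomPos k m a b) n /\
    (n%:Z = (sumM m a b)%:Z - (sumR m a b)%:Z)%R.
Proof.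
exact: (@main_dim k m a b ha_dec ha_last hb_first hb_inc).
Qed.
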